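(* Let $F_1:\mathbf{Sets}\times\mathbf{Sets}\to\mathbf{Sets}\times\mathbf{Sets}$ be the functor $F_1(V,E)=(1,\mathcal{P}(V\uplus E))$ (acting on morphisms by the unique map into $1$ and by $\mathcal{P}(f_V\uplus f_E)$). Let $\mathcal{M}$ be the class of morphisms $\langle f_V,f_E\rangle$ of $F_1$-coalgebras with $f_V$ and $f_E$ both injective. Then $(\mathbf{Coalg}_{F_1},\mathcal{M})$ is an $\mathcal{M}$-adhesive category.
   Context: $1$ denotes a terminal (one-element) set and $\uplus$ disjoint union; $\mathcal{P}$ is the covariant powerset functor ($\mathcal{P}(f)(X)=f(X)$). An $F_1$-coalgebra is an object $(V,E)$ of $\mathbf{Sets}\times\mathbf{Sets}$ with a morphism $(V,E)\to F_1(V,E)$, i.e. essentially a function $c:E\to\mathcal{P}(V\uplus E)$ (graphs with nested hyperedges); morphisms are pairs $(f_V,f_E)$ commuting with the structure maps. A pair $(\mathbf{C},\mathcal{M})$ with $\mathcal{M}$ a class of monomorphisms is $\mathcal{M}$-adhesive if $\mathcal{M}$ contains identities and is closed under composition, pushouts and pullbacks along $\mathcal{M}$-morphisms exist and $\mathcal{M}$ is stable under them, and pushouts along $\mathcal{M}$-morphisms are vertical weak van Kampen squares (for any commutative cube with such a pushout as bottom, pullbacks as back faces and all vertical morphisms in $\mathcal{M}$, the top face is a pushout iff the front faces are pullbacks). *)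

(* Defs.v *)
From Stdlib Require Import FunctionalExtensionality PropExtensionality.
Set Implicit Arguments.

Definition pimage (X Y : Type) (f : X -> Y) (S : X -> Prop) : Y -> Prop :=
  fun y => exists x, S x /\ f x = y.

Definition sum_map (A B C D : Type) (f : A -> C) (g : B -> D) (x : A + B) : C + D :=
  match x with inl a => inl (f a) | inr b => inr (g b) end.

(** An F_1-coalgebra (V,E) -> (1, P(V ⊎ E)); the V-component into 1 is
    unique, so the structure is the map c : E -> P(V ⊎ E). *)
Record coalg := Coalg {
  cV : Type;
  cE : Type;
  cstr : cE -> (cV + cE) -> Prop }.

(** Coalgebra morphisms: pairs (f_V, f_E) commuting with the structure maps,
    i.e. c_B ∘ f_E = P(f_V ⊎ f_E) ∘ c_A (the 1-component commutes trivially). *)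
Record hom (A B : coalg) := Hom {
  hV : cV A -> cV B;
  hE : cE A -> cE B;
  hcomm : forall e, cstr B (hE e) = pimage (sum_map hV hE) (cstr A e) }.

Arguments hV {A B} h _.
Arguments hE {A B} h _.

Definition heq (A B : coalg) (f g : hom A B) : Prop :=
  (forall x, hV f x = hV g x) /\ (forall e, hE f e = hE g e).

Lemma hcomp_comm (A B C : coalg) (g : hom B C) (f : hom A B) (e : cE A) :
  cstr C (hE g (hE f e)) =
  pimage (sum_map (fun x => hV g (hV f x)) (fun x => hE g (hE f x))) (cstr A e).
Proof.
  rewrite (hcomm g), (hcomm f).
  apply functional_extensionality; intros y; apply propositional_extensionality.
  split.
  - intros [x [[z [Hz Hzx]] Hxy]]; subst.
    exists z; split; [exact Hz|]; destruct z; reflexivity.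
  - intros [z [Hz Hzy]]; subst.
    exists (sum_map (hV f) (hE f) z); split.
    + exists z; split; [exact Hz|reflexivity].
    + destruct z; reflexivity.
Qed.

Definition hcomp (A B C : coalg) (g : hom B C) (f : hom A B) : hom A C :=
  @Hom A C (fun x => hV g (hV f x)) (fun x => hE g (hE f x)) (hcomp_comm g f).

Lemma hid_comm (A : coalg) (e : cE A) :
  cstr A e = pimage (sum_map (fun x : cV A => x) (fun x : cE A => x)) (cstr A e).
Proof.
  apply functional_extensionality; intros y; apply propositional_extensionality.
  split.
  - intros H; exists y; split; [exact H|destruct y; reflexivity].
  - intros [z [Hz Hzy]]; subst; destruct z; exact Hz.
Qed.

Definition hid (A : coalg) : hom A A :=
  @Hom A A (fun x => x) (fun x => x) (@hid_comm A).

Definition injective (X Y : Type) (f : X -> Y) : Prop :=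
  forall x y, f x = f y -> x = y.

Definition inM (A B : coalg) (f : hom A B) : Prop :=
  injective (hV f) /\ injective (hE f).

Definition is_mono (A B : coalg) (f : hom A B) : Prop :=
  forall (X : coalg) (g1 g2 : hom X A), heq (hcomp f g1) (hcomp f g2) -> heq g1 g2.

(** Pullback square   A --f--> B
                      |g       |h
                      v        v
                      C --k--> D      (A, f, g) is a pullback of (h, k). *)
Definition is_pullback (A B C D : coalg)
  (f : hom A B) (g : hom A C) (h : hom B D) (k : hom C D) : Prop :=
  heq (hcomp h f) (hcomp k g) /\
  forall (X : coalg) (x1 : hom X B) (x2 : hom X C),
    heq (hcomp h x1) (hcomp k x2) ->
    exists u : hom X A,
      heq (hcomp f u) x1 /\ heq (hcomp g u) x2 /\
      forall u' : hom X A, heq (hcomp f u') x1 -> heq (hcomp g u') x2 -> heq u u'.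

(** Pushout square    A --f--> B
                      |g       |h
                      v        v
                      C --k--> D      (D, h, k) is a pushout of (f, g). *)
Definition is_pushout (A B C D : coalg)
  (f : hom A B) (g : hom A C) (h : hom B D) (k : hom C D) : Prop :=
  heq (hcomp h f) (hcomp k g) /\
  forall (X : coalg) (y1 : hom B X) (y2 : hom C X),
    heq (hcomp y1 f) (hcomp y2 g) ->
    exists u : hom D X,
      heq (hcomp u h) y1 /\ heq (hcomp u k) y2 /\
      forall u' : hom D X, heq (hcomp u' h) y1 -> heq (hcomp u' k) y2 -> heq u u'.

(** Vertical weak van Kampen property of a square (bottom face of a cube)
      A --m--> B        A' --m'--> B'
      |f       |g       |f'        |g'     vertical: a : A'->A, b : B'->B,
      v        v        v          v                 c : C'->C, d : D'->D
      C --n--> D        C' --n'--> D'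
    For every commutative cube with this bottom face, back faces pullbacks and
    all vertical morphisms in M: top face pushout <-> front faces pullbacks. *)
Definition vertical_weak_VK (A B C D : coalg)
  (m : hom A B) (f : hom A C) (g : hom B D) (n : hom C D) : Prop :=
  forall (A' B' C' D' : coalg)
    (m' : hom A' B') (f' : hom A' C') (g' : hom B' D') (n' : hom C' D')
    (a : hom A' A) (b : hom B' B) (c : hom C' C) (d : hom D' D),
    heq (hcomp g' m') (hcomp n' f') ->
    heq (hcomp d g') (hcomp g b) ->
    heq (hcomp d n') (hcomp n c) ->
    (* back faces are pullbacks (these include their commutativity) *)
    is_pullback m' a b m ->
    is_pullback f' a c f ->
    inM a -> inM b -> inM c -> inM d ->
    (is_pushout m' f' g' n' <-> (is_pullback g' b d g /\ is_pullback n' c d n)).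

Definition M_adhesive_Coalg_F1 : Prop :=
  (forall (A B : coalg) (f : hom A B), inM f -> is_mono f) /\
  (forall A : coalg, inM (hid A)) /\
  (forall (A B C : coalg) (f : hom A B) (g : hom B C),
      inM f -> inM g -> inM (hcomp g f)) /\
  (forall (A B C : coalg) (m : hom A B) (f : hom A C), inM m ->
      exists (D : coalg) (g : hom B D) (n : hom C D), is_pushout m f g n) /\
  (forall (B C D : coalg) (m : hom B D) (k : hom C D), inM m ->
      exists (A : coalg) (f : hom A B) (g : hom A C), is_pullback f g m k) /\
  (forall (A B C D : coalg) (m : hom A B) (f : hom A C) (g : hom B D) (n : hom C D),
      is_pushout m f g n -> inM m -> inM n) /\
  (forall (A B C D : coalg) (f : hom A B) (g : hom A C) (h : hom B D) (k : hom C D),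
      is_pullback f g h k -> inM h -> inM g) /\
  (forall (A B C D : coalg) (m : hom A B) (f : hom A C) (g : hom B D) (n : hom C D),
      is_pushout m f g n -> inM m -> vertical_weak_VK m f g n).

(* Main.v *)
Require Import Defs.
From Stdlib Require Import FunctionalExtensionality PropExtensionality ClassicalEpsilon ProofIrrelevance.
Set Implicit Arguments.

Lemma sum_map_inj (A B C D : Type) (f1 : A -> C) (f2 : B -> D) :
  injective f1 -> injective f2 -> injective (sum_map f1 f2).
Proof.
  intros H1 H2 [x|x] [y|y] H; simpl in H; try discriminate;
  injection H as H; f_equal; auto.
Qed.

Lemma pimage_comp (A B C D E F : Type) (f1 : C -> E) (f2 : D -> F) (g1 : A -> C) (g2 : B -> D) S :
  pimage (sum_map f1 f2) (pimage (sum_map g1 g2) S) =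
  pimage (sum_map (fun x => f1 (g1 x)) (fun x => f2 (g2 x))) S.
Proof.
  apply functional_extensionality; intro y; apply propositional_extensionality; split.
  - intros [x [[z [Hz Hzx]] Hxy]]; subst. exists z; split; auto; destruct z; reflexivity.
  - intros [z [Hz Hzy]]; subst. exists (sum_map g1 g2 z); split;
    [exists z; auto | destruct z; reflexivity].
Qed.

Lemma pimage_ext (A B C D : Type) (f1 g1 : A -> C) (f2 g2 : B -> D) :
  (forall x, f1 x = g1 x) -> (forall x, f2 x = g2 x) ->
  forall S, pimage (sum_map f1 f2) S = pimage (sum_map g1 g2) S.
Proof.
  intros H1 H2 S.
  assert (f1 = g1) by (apply functional_extensionality; auto).
  assert (f2 = g2) by (apply functional_extensionality; auto).
  subst; reflexivity.
Qed.

Lemma pimage_inj (A B C D : Type) (f1 : A -> C) (f2 : B -> D) S T :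
  injective f1 -> injective f2 ->
  pimage (sum_map f1 f2) S = pimage (sum_map f1 f2) T -> S = T.
Proof.
  intros H1 H2 H. pose proof (sum_map_inj H1 H2) as Hi.
  apply functional_extensionality; intro s; apply propositional_extensionality; split; intro Hs.
  - assert (P : pimage (sum_map f1 f2) S (sum_map f1 f2 s)) by (exists s; auto).
    rewrite H in P. destruct P as [t [Ht E]]. apply Hi in E. subst; auto.
  - assert (P : pimage (sum_map f1 f2) T (sum_map f1 f2 s)) by (exists s; auto).
    rewrite <- H in P. destruct P as [t [Ht E]]. apply Hi in E. subst; auto.
Qed.

Lemma cancel_comm (X B D : coalg) (h : hom B D) (uV : cV X -> cV B) (uE : cE X -> cE B) e :
  injective (hV h) -> injective (hE h) ->
  (forall e, cstr D (hE h (uE e)) =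
     pimage (sum_map (fun x => hV h (uV x)) (fun x => hE h (uE x))) (cstr X e)) ->
  cstr B (uE e) = pimage (sum_map uV uE) (cstr X e).
Proof.
  intros HV HE H. apply (pimage_inj HV HE).
  rewrite <- (hcomm h (uE e)), H, pimage_comp. reflexivity.
Qed.

Definition SPB (A B C D : Type) (f : A -> B) (g : A -> C) (h : B -> D) (k : C -> D) : Prop :=
  (forall x, h (f x) = k (g x)) /\ injective g /\ (forall c b, h b = k c -> exists a, g a = c).

Definition SPO (A B C D : Type) (m : A -> B) (f : A -> C) (g : B -> D) (n : C -> D) : Prop :=
  (forall a, g (m a) = n (f a)) /\
  (forall d, (exists b, g b = d) \/ (exists c, n c = d)) /\
  injective n /\
  (forall b c, g b = n c -> exists a, b = m a /\ f a = c) /\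
  (forall b1 b2, g b1 = g b2 -> b1 = b2 \/ exists a1 a2, b1 = m a1 /\ b2 = m a2 /\ f a1 = f a2).

Lemma set_vk (A B C D A' B' C' D' : Type) (m:A->B) (f:A->C) (g:B->D) (n:C->D)
  (m':A'->B') (f':A'->C') (g':B'->D') (n':C'->D') (a:A'->A) (b:B'->B) (c:C'->C) (d:D'->D) :
  (forall x, g' (m' x) = n' (f' x)) ->
  (forall x, d (g' x) = g (b x)) ->
  (forall x, d (n' x) = n (c x)) ->
  SPB m' a b m -> SPB f' a c f ->
  injective b -> injective c -> injective d ->
  SPO m f g n ->
  (SPO m' f' g' n' <-> SPB g' b d g /\ SPB n' c d n).
Proof.
  intros Htop Hdg Hdn [p1 [p2 p3]] [q1 [q2 q3]] Hb Hc Hd [o1 [o2 [o3 [o4 o5]]]].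
  split.
  - intros [t1 [t2 [t3 [t4 t5]]]]. split.
    + split; [exact Hdg|split; [exact Hb|]].
      intros y z Hz. destruct (t2 z) as [[y' Hy']|[x' Hx']]; subst z.
      * rewrite Hdg in Hz. destruct (o5 _ _ Hz) as [E|[a1 [a2 [E1 [E2 E3]]]]].
        -- exists y'; auto.
        -- destruct (p3 a1 y' E1) as [a1' Ha1']. subst a1.
           rewrite <- q1 in E3. destruct (q3 a2 (f' a1') E3) as [a2' Ha2']. subst a2.
           exists (m' a2'). rewrite p1. auto.
      * rewrite Hdn in Hz. destruct (o4 y (c x') (eq_sym Hz)) as [a1 [E1 E2]].
        destruct (q3 a1 x' (eq_sym E2)) as [a1' Ha1']. subst a1.
        exists (m' a1'). rewrite p1. auto.
    + split; [exact Hdn|split; [exact Hc|]].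
      intros x z Hz. destruct (t2 z) as [[y' Hy']|[x' Hx']]; subst z.
      * rewrite Hdg in Hz. destruct (o4 _ _ Hz) as [a1 [E1 E2]].
        destruct (p3 a1 y' E1) as [a1' Ha1']. subst a1.
        exists (f' a1'). rewrite q1. auto.
      * rewrite Hdn in Hz. exists x'. apply o3; auto.
  - intros [[r1 [r2 r3]] [s1 [s2 s3]]].
    split; [exact Htop|]. split; [|split; [|split]].
    + intro z. destruct (o2 (d z)) as [[y Hy]|[x Hx]].
      * destruct (r3 y z (eq_sym Hy)) as [y' Hy']. left; exists y'. apply Hd.
        rewrite Hdg, Hy'. auto.
      * destruct (s3 x z (eq_sym Hx)) as [x' Hx']. right; exists x'. apply Hd.
        rewrite Hdn, Hx'. auto.
    + intros x1 x2 H. apply Hc, o3. rewrite <- !Hdn, H. reflexivity.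
    + intros y' x' H. assert (H' : g (b y') = n (c x')) by (rewrite <- Hdg, <- Hdn, H; auto).
      destruct (o4 _ _ H') as [a1 [E1 E2]].
      destruct (p3 a1 y' E1) as [a1' Ha1']. subst a1.
      exists a1'. split.
      * apply Hb. rewrite p1. auto.
      * apply Hc. rewrite q1. auto.
    + intros y1 y2 H. assert (H' : g (b y1) = g (b y2)) by (rewrite <- !Hdg, H; auto).
      destruct (o5 _ _ H') as [E|[a1 [a2 [E1 [E2 E3]]]]].
      * left; apply Hb; auto.
      * destruct (p3 a1 y1 E1) as [a1' Ha1']. destruct (p3 a2 y2 E2) as [a2' Ha2']. subst a1 a2.
        right; exists a1', a2'. split; [|split].
        -- apply Hb. rewrite p1. auto.
        -- apply Hb. rewrite p1. auto.
        -- apply Hc. rewrite !q1. auto.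
Qed.

Definition PV (B C D : coalg) (h : hom B D) (k : hom C D) : Type :=
  {x : cV C | exists b, hV h b = hV k x}.
Definition PE (B C D : coalg) (h : hom B D) (k : hom C D) : Type :=
  {x : cE C | exists b, hE h b = hE k x}.
Definition Pc (B C D : coalg) (h : hom B D) (k : hom C D) : coalg :=
  @Coalg (PV h k) (PE h k)
    (fun e s => cstr C (proj1_sig e) (sum_map (@proj1_sig _ _) (@proj1_sig _ _) s)).

Lemma iota_comm (B C D : coalg) (h : hom B D) (k : hom C D) (e : cE (Pc h k)) :
  cstr C (proj1_sig e) = pimage (sum_map (@proj1_sig _ _) (@proj1_sig _ _)) (cstr (Pc h k) e).
Proof.
  destruct e as [x [b Hb]].
  apply functional_extensionality; intro s; apply propositional_extensionality; simpl; split.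
  - intro Hs.
    assert (Hk : pimage (sum_map (hV k) (hE k)) (cstr C x) (sum_map (hV k) (hE k) s))
      by (exists s; split; auto).
    rewrite <- (hcomm k x), <- Hb, (hcomm h b) in Hk.
    destruct Hk as [t [Ht Hts]].
    destruct s as [v|v]; destruct t as [w|w]; simpl in Hts; try discriminate; injection Hts as Hts.
    + exists (inl (exist (fun x => exists b, hV h b = hV k x) v (ex_intro _ w Hts))); simpl; auto.
    + exists (inr (exist (fun x => exists b, hE h b = hE k x) v (ex_intro _ w Hts))); simpl; auto.
  - intros [s' [Hs' Hs's]]. subst s. exact Hs'.
Qed.

Definition iota (B C D : coalg) (h : hom B D) (k : hom C D) : hom (Pc h k) C :=
  @Hom (Pc h k) C (@proj1_sig _ _) (@proj1_sig _ _) (@iota_comm B C D h k).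

Definition jV (B C D : coalg) (h : hom B D) (k : hom C D) (x : PV h k) : cV B :=
  proj1_sig (constructive_indefinite_description _ (proj2_sig x)).
Definition jE (B C D : coalg) (h : hom B D) (k : hom C D) (x : PE h k) : cE B :=
  proj1_sig (constructive_indefinite_description _ (proj2_sig x)).
Lemma jV_spec (B C D : coalg) (h : hom B D) (k : hom C D) (x : PV h k) : hV h (jV x) = hV k (proj1_sig x).
Proof. unfold jV. destruct (constructive_indefinite_description _ _) as [b Hb]. exact Hb. Qed.
Lemma jE_spec (B C D : coalg) (h : hom B D) (k : hom C D) (x : PE h k) : hE h (jE x) = hE k (proj1_sig x).
Proof. unfold jE. destruct (constructive_indefinite_description _ _) as [b Hb]. exact Hb. Qed.

Lemma j_comm (B C D : coalg) (h : hom B D) (k : hom C D) (Hh : inM h) e :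
  cstr B (jE e) = pimage (sum_map (@jV _ _ _ h k) (@jE _ _ _ h k)) (cstr (Pc h k) e).
Proof.
  destruct Hh as [HV HE]. apply (cancel_comm (Pc h k) h (@jV _ _ _ h k) (@jE _ _ _ h k)); auto. clear e; intro e.
  rewrite jE_spec, (hcomm k), (iota_comm e), pimage_comp.
  apply pimage_ext; intro x; symmetry; [apply jV_spec|apply jE_spec].
Qed.

Definition jhom (B C D : coalg) (h : hom B D) (k : hom C D) (Hh : inM h) : hom (Pc h k) B :=
  @Hom (Pc h k) B (@jV _ _ _ h k) (@jE _ _ _ h k) (j_comm Hh).

Lemma proj1_sig_inj (T : Type) (P : T -> Prop) : injective (@proj1_sig T P).
Proof. intros [x p] [y q] H; simpl in H; subst; f_equal; apply proof_irrelevance. Qed.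

Definition gtV A B C D (f : hom A B) (g : hom A C) (h : hom B D) (k : hom C D)
  (Hc : heq (hcomp h f) (hcomp k g)) (x : cV A) : PV h k :=
  exist _ (hV g x) (ex_intro _ (hV f x) (proj1 Hc x)).
Definition gtE A B C D (f : hom A B) (g : hom A C) (h : hom B D) (k : hom C D)
  (Hc : heq (hcomp h f) (hcomp k g)) (x : cE A) : PE h k :=
  exist _ (hE g x) (ex_intro _ (hE f x) (proj2 Hc x)).

Lemma gt_comm A B C D (f : hom A B) (g : hom A C) (h : hom B D) (k : hom C D)
  (Hc : heq (hcomp h f) (hcomp k g)) e :
  cstr (Pc h k) (gtE Hc e) = pimage (sum_map (gtV Hc) (gtE Hc)) (cstr A e).
Proof.
  apply (cancel_comm A (iota h k) (gtV Hc) (gtE Hc)); try apply proj1_sig_inj.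
  clear e; intro e. exact (hcomm g e).
Qed.

Definition gthom A B C D (f : hom A B) (g : hom A C) (h : hom B D) (k : hom C D)
  (Hc : heq (hcomp h f) (hcomp k g)) : hom A (Pc h k) :=
  @Hom A (Pc h k) (gtV Hc) (gtE Hc) (gt_comm Hc).

Lemma pb_to_SPB A B C D (f : hom A B) (g : hom A C) (h : hom B D) (k : hom C D) :
  inM h -> is_pullback f g h k ->
  SPB (hV f) (hV g) (hV h) (hV k) /\ SPB (hE f) (hE g) (hE h) (hE k).
Proof.
  intros Hh [Hc Hu].
  assert (HJI : heq (hcomp h (jhom k Hh)) (hcomp k (iota h k)))
    by (split; intro x; [apply jV_spec|apply jE_spec]).
  destruct (Hu _ _ _ HJI) as [u [Hfu [Hgu _]]].
  destruct (Hu _ _ _ Hc) as [u0 [_ [_ U0]]].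
  assert (E1 : heq u0 (hid A)) by (apply U0; split; intro; reflexivity).
  destruct Hh as [HV HE].
  assert (E2 : heq u0 (hcomp u (gthom Hc))).
  { apply U0; split; intro x; simpl.
    - apply HV. pose proof (proj1 Hc (hV u (gtV Hc x))) as X1; simpl in X1. rewrite X1.
      pose proof (proj1 Hgu (gtV Hc x)) as X2; simpl in X2. rewrite X2.
      simpl. symmetry; exact (proj1 Hc x).
    - apply HE. pose proof (proj2 Hc (hE u (gtE Hc x))) as X1; simpl in X1. rewrite X1.
      pose proof (proj2 Hgu (gtE Hc x)) as X2; simpl in X2. rewrite X2.
      simpl. symmetry; exact (proj2 Hc x).
    - exact (proj1 Hgu (gtV Hc x)).
    - exact (proj2 Hgu (gtE Hc x)). }
  destruct Hc as [HcV HcE]. destruct E1 as [E1V E1E]. destruct E2 as [E2V E2E].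
  simpl in *.
  split; (split; [assumption|split]).
  - intros x1 x2 H. rewrite <- (E1V x1), <- (E1V x2), E2V, E2V.
    f_equal. unfold gtV. apply subset_eq_compat. exact H.
  - intros c b Hcb. exists (hV u (exist _ c (ex_intro _ b Hcb))).
    exact (proj1 Hgu _).
  - intros x1 x2 H. rewrite <- (E1E x1), <- (E1E x2), E2E, E2E.
    f_equal. unfold gtE. apply subset_eq_compat. exact H.
  - intros c b Hcb. exists (hE u (exist _ c (ex_intro _ b Hcb))).
    exact (proj2 Hgu _).
Qed.

Definition uV A B C D (f : hom A B) (g : hom A C) (h : hom B D) (k : hom C D)
  (S : SPB (hV f) (hV g) (hV h) (hV k)) (X : coalg) (x1 : hom X B) (x2 : hom X C)
  (H : heq (hcomp h x1) (hcomp k x2)) (x : cV X) : cV A :=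
  proj1_sig (constructive_indefinite_description _ (proj2 (proj2 S) (hV x2 x) (hV x1 x) (proj1 H x))).
Definition uE A B C D (f : hom A B) (g : hom A C) (h : hom B D) (k : hom C D)
  (S : SPB (hE f) (hE g) (hE h) (hE k)) (X : coalg) (x1 : hom X B) (x2 : hom X C)
  (H : heq (hcomp h x1) (hcomp k x2)) (x : cE X) : cE A :=
  proj1_sig (constructive_indefinite_description _ (proj2 (proj2 S) (hE x2 x) (hE x1 x) (proj2 H x))).

Lemma SPB_to_pb A B C D (f : hom A B) (g : hom A C) (h : hom B D) (k : hom C D) :
  inM h -> SPB (hV f) (hV g) (hV h) (hV k) -> SPB (hE f) (hE g) (hE h) (hE k) ->
  is_pullback f g h k.
Proof.
  intros [HhV HhE] SV SE. split.
  - split; intro x; [apply (proj1 SV)|apply (proj1 SE)].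
  - intros X x1 x2 H.
    assert (PVs : forall x, hV g (uV f g SV H x) = hV x2 x).
    { intro x; unfold uV. destruct (constructive_indefinite_description _ _) as [a Ha]. exact Ha. }
    assert (PEs : forall x, hE g (uE f g SE H x) = hE x2 x).
    { intro x; unfold uE. destruct (constructive_indefinite_description _ _) as [a Ha]. exact Ha. }
    assert (Hcomm : forall e, cstr A (uE f g SE H e) = pimage (sum_map (uV f g SV H) (uE f g SE H)) (cstr X e)).
    { intro e. apply (cancel_comm X g (uV f g SV H) (uE f g SE H)); [apply (proj1 (proj2 SV))|apply (proj1 (proj2 SE))|].
      clear e; intro e. rewrite PEs, (hcomm x2). apply pimage_ext; intro; symmetry; auto. }
    exists (@Hom X A (uV f g SV H) (uE f g SE H) Hcomm).
    split; [|split].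
    + split; intro x; simpl.
      * apply HhV. rewrite (proj1 SV), PVs. symmetry; exact (proj1 H x).
      * apply HhE. rewrite (proj1 SE), PEs. symmetry; exact (proj2 H x).
    + split; intro x; simpl; auto.
    + intros u' _ [H1 H2]; split; intro x; simpl in *.
      * apply (proj1 (proj2 SV)). rewrite PVs, H1. auto.
      * apply (proj1 (proj2 SE)). rewrite PEs, H2. auto.
Qed.

Definition Qt (A B : Type) (m : A -> B) : Type := {b : B | ~ exists a, m a = b}.

Definition gfun (A B C : Type) (m : A -> B) (f : A -> C) (b : B) : C + Qt m :=
  match excluded_middle_informative (exists a, m a = b) with
  | left H => inl (f (proj1_sig (constructive_indefinite_description _ H)))
  | right H => inr (exist _ b H)
  end.

Lemma gfun_cases (A B C : Type) (m : A -> B) (f : A -> C) (b : B) :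
  (exists a, m a = b /\ gfun m f b = inl (f a)) \/
  (exists H, gfun m f b = inr (exist _ b H)).
Proof.
  unfold gfun. destruct (excluded_middle_informative _) as [H|H].
  - left. destruct (constructive_indefinite_description _ H) as [a Ha]. simpl. exists a; auto.
  - right. exists H; auto.
Qed.

Lemma SPO_canon (A B C : Type) (m : A -> B) (f : A -> C) :
  injective m -> SPO m f (gfun m f) inl.
Proof.
  intro Hm. split; [|split; [|split; [|split]]].
  - intro a. destruct (gfun_cases m f (m a)) as [[a' [Ha' E]]|[H E]]; rewrite E.
    + apply Hm in Ha'. subst; auto.
    + exfalso; apply H; exists a; auto.
  - intros [c|[b H]].
    + right; exists c; auto.
    + left; exists b. destruct (gfun_cases m f b) as [[a' [Ha' E]]|[H' E]].
      * exfalso; apply H; eauto.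
      * rewrite E. f_equal. apply subset_eq_compat. reflexivity.
  - intros x y H; injection H; auto.
  - intros b c. destruct (gfun_cases m f b) as [[a' [Ha' E]]|[H' E]]; rewrite E; intro H.
    + injection H as H. exists a'; auto.
    + discriminate.
  - intros b1 b2. destruct (gfun_cases m f b1) as [[a1 [Ha1 E1]]|[H1 E1]];
    destruct (gfun_cases m f b2) as [[a2 [Ha2 E2]]|[H2 E2]]; rewrite E1, E2; intro H;
    try discriminate.
    + right. exists a1, a2. injection H as H. auto.
    + left. injection H as H. auto.
Qed.

Definition QV (A B C : coalg) (m : hom A B) (f : hom A C) : Type := (cV C + Qt (hV m))%type.
Definition QE (A B C : coalg) (m : hom A B) (f : hom A C) : Type := (cE C + Qt (hE m))%type.

Definition Qc (A B C : coalg) (m : hom A B) (f : hom A C) : coalg :=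
  @Coalg (QV m f) (QE m f)
   (fun e => match e with
     | inl c => pimage (sum_map (@inl (cV C) (Qt (hV m))) (@inl (cE C) (Qt (hE m)))) (cstr C c)
     | inr b => pimage (sum_map (gfun (hV m) (hV f)) (gfun (hE m) (hE f))) (cstr B (proj1_sig b))
     end).

Definition nQ (A B C : coalg) (m : hom A B) (f : hom A C) : hom C (Qc m f) :=
  @Hom C (Qc m f) (@inl (cV C) (Qt (hV m))) (@inl (cE C) (Qt (hE m))) (fun e => eq_refl).

Lemma gQ_comm (A B C : coalg) (m : hom A B) (f : hom A C) (Hm : inM m) (e : cE B) :
  cstr (Qc m f) (gfun (hE m) (hE f) e) =
  pimage (sum_map (gfun (hV m) (hV f)) (gfun (hE m) (hE f))) (cstr B e).
Proof.
  destruct Hm as [HV HE].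
  destruct (gfun_cases (hE m) (hE f) e) as [[a [Ha E]]|[H E]]; rewrite E; simpl.
  - subst e. rewrite (hcomm f), (hcomm m), !pimage_comp.
    apply pimage_ext; intro x; symmetry; [apply (proj1 (SPO_canon (hV f) HV))|apply (proj1 (SPO_canon (hE f) HE))].
  - reflexivity.
Qed.

Definition gQ (A B C : coalg) (m : hom A B) (f : hom A C) (Hm : inM m) : hom B (Qc m f) :=
  @Hom B (Qc m f) (gfun (hV m) (hV f)) (gfun (hE m) (hE f)) (gQ_comm f Hm).

Definition liftfun (B C D X : Type) (g : B -> D) (n : C -> D) (y1 : B -> X) (y2 : C -> X)
  (H : forall d, exists x, (forall b, g b = d -> x = y1 b) /\ (forall c, n c = d -> x = y2 c))
  (d : D) : X := proj1_sig (constructive_indefinite_description _ (H d)).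

Lemma lift_ex (A B C D X : Type) (m : A -> B) (f : A -> C) (g : B -> D) (n : C -> D)
  (y1 : B -> X) (y2 : C -> X) :
  SPO m f g n -> (forall a, y1 (m a) = y2 (f a)) ->
  forall d, exists x, (forall b, g b = d -> x = y1 b) /\ (forall c, n c = d -> x = y2 c).
Proof.
  intros [o1 [o2 [o3 [o4 o5]]]] Hy d.
  destruct (o2 d) as [[b Hb]|[c Hc]]; subst d.
  - exists (y1 b). split.
    + intros b' Hb'. destruct (o5 _ _ Hb') as [E|[a1 [a2 [E1 [E2 E3]]]]].
      * subst; auto.
      * subst. rewrite !Hy, E3. auto.
    + intros c Hc. destruct (o4 _ _ (eq_sym Hc)) as [a [E1 E2]]. subst. auto.
  - exists (y2 c). split.
    + intros b Hb. destruct (o4 _ _ Hb) as [a [E1 E2]]. subst. auto.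
    + intros c' Hc'. apply o3 in Hc'. subst; auto.
Qed.

Lemma liftfun_spec (B C D X : Type) (g : B -> D) (n : C -> D) (y1 : B -> X) (y2 : C -> X) H :
  (forall b, @liftfun B C D X g n y1 y2 H (g b) = y1 b) /\
  (forall c, @liftfun B C D X g n y1 y2 H (n c) = y2 c).
Proof.
  split; intro; unfold liftfun; destruct (constructive_indefinite_description _ _) as [x [H1 H2]];
  simpl; auto.
Qed.

Lemma SPO_to_po A B C D (m : hom A B) (f : hom A C) (g : hom B D) (n : hom C D) :
  SPO (hV m) (hV f) (hV g) (hV n) -> SPO (hE m) (hE f) (hE g) (hE n) ->
  is_pushout m f g n.
Proof.
  intros SV SE. split.
  - split; intro x; [apply (proj1 SV)|apply (proj1 SE)].
  - intros X y1 y2 [Hy1 Hy2].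
    pose (LV := @lift_ex _ _ _ _ _ (hV m) (hV f) (hV g) (hV n) (hV y1) (hV y2) SV Hy1). pose (LE := @lift_ex _ _ _ _ _ (hE m) (hE f) (hE g) (hE n) (hE y1) (hE y2) SE Hy2).
    pose (uV := @liftfun _ _ _ _ (hV g) (hV n) (hV y1) (hV y2) LV).
    pose (uE := @liftfun _ _ _ _ (hE g) (hE n) (hE y1) (hE y2) LE).
    destruct (@liftfun_spec _ _ _ _ (hV g) (hV n) (hV y1) (hV y2) LV) as [SgV SnV].
    destruct (@liftfun_spec _ _ _ _ (hE g) (hE n) (hE y1) (hE y2) LE) as [SgE SnE].
    fold uV in SgV, SnV. fold uE in SgE, SnE.
    assert (Hc : forall d, cstr X (uE d) = pimage (sum_map uV uE) (cstr D d)).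
    { intro d. destruct (proj1 (proj2 SE) d) as [[b Hb]|[c Hc]]; subst d.
      - rewrite SgE, (hcomm y1), (hcomm g), pimage_comp.
        apply pimage_ext; intro; symmetry; auto.
      - rewrite SnE, (hcomm y2), (hcomm n), pimage_comp.
        apply pimage_ext; intro; symmetry; auto. }
    exists (@Hom D X uV uE Hc). split; [|split].
    + split; intro; simpl; auto.
    + split; intro; simpl; auto.
    + intros u' [H1 H2] [H3 H4]. simpl in *. split.
      * intro d. destruct (proj1 (proj2 SV) d) as [[b Hb]|[c Hc']]; subst d.
        -- rewrite SgV, H1; auto.
        -- rewrite SnV, H3; auto.
      * intro d. destruct (proj1 (proj2 SE) d) as [[b Hb]|[c Hc']]; subst d.
        -- rewrite SgE, H2; auto.
        -- rewrite SnE, H4; auto.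
Qed.

Lemma SPO_transfer (A B C D Q : Type) (m:A->B) (f:A->C) (g:B->D) (n:C->D)
  (gq:B->Q) (nq:C->Q) (phi:D->Q) (psi:Q->D):
  SPO m f gq nq -> (forall a, g (m a) = n (f a)) ->
  (forall b, phi (g b) = gq b) -> (forall c, phi (n c) = nq c) ->
  (forall b, psi (gq b) = g b) -> (forall c, psi (nq c) = n c) ->
  (forall d, psi (phi d) = d) -> SPO m f g n.
Proof.
  intros [s1 [s2 [s3 [s4 s5]]]] Hc Hpg Hpn Hsg Hsn Hpp.
  split; [exact Hc|split; [|split; [|split]]].
  - intro d. destruct (s2 (phi d)) as [[b Hb]|[c Hc']].
    + left; exists b. rewrite <- (Hpp d), <- Hb, Hsg. auto.
    + right; exists c. rewrite <- (Hpp d), <- Hc', Hsn. auto.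
  - intros c1 c2 H. apply s3. rewrite <- !Hpn, H. auto.
  - intros b c H. apply s4. rewrite <- Hpg, <- Hpn, H. auto.
  - intros b1 b2 H. apply s5. rewrite <- !Hpg, H. auto.
Qed.

Lemma po_to_SPO A B C D (m : hom A B) (f : hom A C) (g : hom B D) (n : hom C D) :
  inM m -> is_pushout m f g n ->
  SPO (hV m) (hV f) (hV g) (hV n) /\ SPO (hE m) (hE f) (hE g) (hE n).
Proof.
  intros Hm [Hc Hu].
  pose proof (SPO_canon (hV f) (proj1 Hm)) as CV.
  pose proof (SPO_canon (hE f) (proj2 Hm)) as CE.
  assert (HQ : is_pushout m f (gQ f Hm) (nQ m f)) by (apply SPO_to_po; assumption).
  assert (HmQ : heq (hcomp (gQ f Hm) m) (hcomp (nQ m f) f))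
    by (split; intro; [apply (proj1 CV)|apply (proj1 CE)]).
  destruct (Hu _ _ _ HmQ) as [phi [Hpg [Hpn _]]].
  destruct (proj2 HQ _ _ _ Hc) as [psi [Hsg [Hsn _]]].
  destruct (Hu _ _ _ Hc) as [u0 [_ [_ U0]]].
  assert (E1 : heq u0 (hid D)) by (apply U0; split; intro; reflexivity).
  assert (E2 : heq u0 (hcomp psi phi)).
  { apply U0; split; intro x; simpl.
    - etransitivity; [apply f_equal; exact (proj1 Hpg x)|exact (proj1 Hsg x)].
    - etransitivity; [apply f_equal; exact (proj2 Hpg x)|exact (proj2 Hsg x)].
    - etransitivity; [apply f_equal; exact (proj1 Hpn x)|exact (proj1 Hsn x)].
    - etransitivity; [apply f_equal; exact (proj2 Hpn x)|exact (proj2 Hsn x)]. }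
  split.
  - apply (@SPO_transfer _ _ _ _ _ (hV m) (hV f) (hV g) (hV n) _ _ (hV phi) (hV psi) CV (proj1 Hc) (proj1 Hpg) (proj1 Hpn) (proj1 Hsg) (proj1 Hsn)).
    intro d. exact (eq_trans (eq_sym (proj1 E2 d)) (proj1 E1 d)).
  - apply (@SPO_transfer _ _ _ _ _ (hE m) (hE f) (hE g) (hE n) _ _ (hE phi) (hE psi) CE (proj2 Hc) (proj2 Hpg) (proj2 Hpn) (proj2 Hsg) (proj2 Hsn)).
    intro d. exact (eq_trans (eq_sym (proj2 E2 d)) (proj2 E1 d)).
Qed.

Theorem mainTheorem9 : M_adhesive_Coalg_F1.
Proof.
  unfold M_adhesive_Coalg_F1.
  split; [|split; [|split; [|split; [|split; [|split; [|split]]]]]].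
  - intros A B f [HV HE] X g1 g2 [H1 H2]. split; intro x; [apply HV, H1|apply HE, H2].
  - intro A. split; intros x y H; exact H.
  - intros A B C f g [f1 f2] [g1 g2]. split; intros x y H; [apply f1, g1, H|apply f2, g2, H].
  - intros A B C m f Hm. exists (Qc m f), (gQ f Hm), (nQ m f).
    apply SPO_to_po; [apply (SPO_canon (hV f) (proj1 Hm))|apply (SPO_canon (hE f) (proj2 Hm))].
  - intros B C D m k Hm. exists (Pc m k), (jhom k Hm), (iota m k).
    apply SPB_to_pb; [exact Hm| |].
    + split; [intro x; apply jV_spec|split; [apply proj1_sig_inj|]].
      intros c b H. exists (exist _ c (ex_intro _ b H)). reflexivity.
    + split; [intro x; apply jE_spec|split; [apply proj1_sig_inj|]].
      intros c b H. exists (exist _ c (ex_intro _ b H)). reflexivity.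
  - intros A B C D m f g n Hpo Hm. destruct (po_to_SPO Hm Hpo) as [SV SE].
    split; [apply (proj1 (proj2 (proj2 SV)))|apply (proj1 (proj2 (proj2 SE)))].
  - intros A B C D f g h k Hpb Hh. destruct (pb_to_SPB Hh Hpb) as [SV SE].
    split; [apply (proj1 (proj2 SV))|apply (proj1 (proj2 SE))].
  - intros A B C D m f g n Hpo Hm.
    intros A' B' C' D' m' f' g' n' a b c d [T1 T2] [G1 G2] [N1 N2] Bk1 Bk2 Ha Hb Hc Hd.
    destruct (po_to_SPO Hm Hpo) as [OV OE].
    destruct (pb_to_SPB Hb Bk1) as [P1V P1E].
    destruct (pb_to_SPB Hc Bk2) as [P2V P2E].
    assert (Hm' : inM m').
    { split; intros x y H.
      - apply (proj1 Ha), (proj1 Hm). rewrite <- !(proj1 P1V). rewrite H. reflexivity.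
      - apply (proj2 Ha), (proj2 Hm). rewrite <- !(proj1 P1E). rewrite H. reflexivity. }
    pose proof (@set_vk _ _ _ _ _ _ _ _ (hV m) (hV f) (hV g) (hV n) (hV m') (hV f') (hV g') (hV n')
                  (hV a) (hV b) (hV c) (hV d) T1 G1 N1 P1V P2V (proj1 Hb) (proj1 Hc) (proj1 Hd) OV) as VKV.
    pose proof (@set_vk _ _ _ _ _ _ _ _ (hE m) (hE f) (hE g) (hE n) (hE m') (hE f') (hE g') (hE n')
                  (hE a) (hE b) (hE c) (hE d) T2 G2 N2 P1E P2E (proj2 Hb) (proj2 Hc) (proj2 Hd) OE) as VKE.
    split.
    + intro Htop. destruct (po_to_SPO Hm' Htop) as [TV TE].
      destruct (proj1 VKV TV) as [FV1 FV2]. destruct (proj1 VKE TE) as [FE1 FE2].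
      split; apply SPB_to_pb; assumption.
    + intros [F1 F2]. destruct (pb_to_SPB Hd F1) as [FV1 FE1]. destruct (pb_to_SPB Hd F2) as [FV2 FE2].
      apply SPO_to_po; [apply (proj2 VKV)|apply (proj2 VKE)]; split; assumption.
Qed.
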